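(* For every $n\ge2$, the Lie group of invertible $n\times n$ upper triangular real matrices has the topological $R_\infty$-property.
   Context: For an automorphism $\varphi$ of a group $G$, the $\varphi$-twisted conjugacy classes are the equivalence classes of the relation $x\sim_\varphi y$ iff $y=gx\varphi(g)^{-1}$ for some $g\in G$; $R(\varphi)\in\mathbb{N}\cup\{\infty\}$ is their number. A topological group $G$ has the topological $R_\infty$-property if $R(\varphi)=\infty$ for every automorphism $\varphi$ of $G$ that is a homeomorphism (for a Lie group: every continuous automorphism). *)

(* Defs.v *)
From HB Require Import structures.
From mathcomp Require Import all_boot all_order all_algebra.
From mathcomp Require Import all_classical all_reals all_analysis.
Set Implicit Arguments. Unset Strict Implicit. Unset Printing Implicit Defensive.
Import Order.TTheory GRing.Theory Num.Theory.
Import numFieldNormedType.Exports.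
Local Open Scope classical_set_scope.
Local Open Scope ring_scope.

Definition upper_triangular (R : pzRingType) (n : nat) (A : 'M[R]_n) : Prop :=
  forall i j : 'I_n, (j < i)%N -> A i j = 0.

Definition UT (R : comUnitRingType) (n : nat) : set 'M[R]_n :=
  [set A | upper_triangular A /\ A \in unitmx].

Definition topological_automorphism (R : realType) (n : nat)
    (G : set 'M[R]_n) (phi : 'M[R]_n -> 'M[R]_n) : Prop :=
  [/\ (forall x, G x -> G (phi x)),
      (forall x y, G x -> G y -> phi (x *m y) = phi x *m phi y),
      {within G, continuous phi} &
      exists psi : 'M[R]_n -> 'M[R]_n,
        [/\ (forall x, G x -> G (psi x)),
            (forall x, G x -> psi (phi x) = x),
            (forall x, G x -> phi (psi x) = x) &
            {within G, continuous psi}]].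

Definition twisted_conj (R : realType) (n : nat) (G : set 'M[R]_n)
    (phi : 'M[R]_n -> 'M[R]_n) (x y : 'M[R]_n) : Prop :=
  exists2 g, G g & y = g *m x *m invmx (phi g).

Definition twisted_classes (R : realType) (n : nat) (G : set 'M[R]_n)
    (phi : 'M[R]_n -> 'M[R]_n) : set (set 'M[R]_n) :=
  [set [set y | G y /\ twisted_conj G phi x y] | x in G].

Definition Reidemeister_infinite (R : realType) (n : nat) (G : set 'M[R]_n)
    (phi : 'M[R]_n -> 'M[R]_n) : Prop :=
  ~ finite_set (twisted_classes G phi).

Definition top_R_infty (R : realType) (n : nat) (G : set 'M[R]_n) : Prop :=
  forall phi : 'M[R]_n -> 'M[R]_n,
    topological_automorphism G phi -> Reidemeister_infinite G phi.

(* Main.v *)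
Require Import Defs.
From mathcomp Require Import all_boot all_order all_algebra.
From mathcomp Require Import all_classical all_reals all_analysis.
From mathcomp Require Import lra ring.
Set Implicit Arguments. Unset Strict Implicit. Unset Printing Implicit Defensive.
Import Order.TTheory GRing.Theory Num.Theory.
Import numFieldNormedType.Exports.
Local Open Scope classical_set_scope.
Local Open Scope ring_scope.

Section Mx.
Variables (R : realType) (n : nat).
Implicit Types A B : 'M[R]_n.

Lemma mul_delta_l (i j k l : 'I_n) A :
  (delta_mx i j *m A) k l = (k == i)%:R * A j l.
Proof.
rewrite mxE (bigD1 j) //= big1 ?addr0; first by rewrite mxE eqxx andbT.
by move=> p /negbTE pj; rewrite mxE pj andbF mul0r.
Qed.

Lemma mul_delta_r (i j k l : 'I_n) A :
  (A *m delta_mx i j) k l = A k i * (l == j)%:R.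
Proof.
rewrite mxE (bigD1 i) //= big1 ?addr0; first by rewrite mxE eqxx.
by move=> p /negbTE pj; rewrite mxE pj mulr0.
Qed.

Lemma ut_mul A B : upper_triangular A -> upper_triangular B ->
  upper_triangular (A *m B).
Proof.
move=> uA uB i j ji; rewrite mxE big1 // => l _.
case: (ltnP l i) => li; first by rewrite uA // mul0r.
by rewrite uB ?mulr0 //; exact: leq_trans ji li.
Qed.

Lemma ut_diag_mul A B k : upper_triangular A -> upper_triangular B ->
  (A *m B) k k = A k k * B k k.
Proof.
move=> uA uB; rewrite mxE (bigD1 k) //= big1 ?addr0 // => l lk.
case: (ltngtP l k) => h; first by rewrite uA // mul0r.
  by rewrite uB ?mulr0.
by move/val_inj: h => h; rewrite h eqxx in lk.
Qed.

Lemma ut_det A : upper_triangular A -> \det A = \prod_i A i i.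
Proof.
move=> uA; rewrite -det_tr det_trig.
  by apply: eq_bigr => i _; rewrite mxE.
by apply/is_trig_mxP => i j ij; rewrite mxE uA.
Qed.

Lemma UT_diag_neq0 A k : UT A -> A k k != 0.
Proof.
move=> [uA unA]; move: unA; rewrite unitmxE unitfE ut_det //.
by rewrite (bigD1 k) //= mulf_eq0 negb_or => /andP[].
Qed.

Lemma UT_mul A B : UT A -> UT B -> UT (A *m B).
Proof.
move=> [uA nA] [uB nB]; split; first exact: ut_mul.
by rewrite unitmx_mul nA nB.
Qed.

Lemma UT1 : UT (1%:M : 'M[R]_n).
Proof.
split; last by rewrite unitmx1.
by move=> i j ji; rewrite mxE; case: eqP => // h; rewrite h ltnn in ji.
Qed.

End Mx.

Section Z.
Variables (R : realType) (m : nat).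
Local Notation N := m.+2.
Implicit Types A B u w h : 'M[R]_N.
Local Notation i0 := (@ord0 m.+1).
Local Notation i1 := (@ord_max m.+1).

Definition Uset : set 'M[R]_N := [set A | UT A /\ forall k, A k k = 1].

Definition E : 'M[R]_N := delta_mx i0 i1.
Definition zz (t : R) : 'M[R]_N := 1%:M + t *: E.

Lemma i01 : (i0 == i1) = false.
Proof. by []. Qed.
Lemma i10 : (i1 == i0) = false.
Proof. by []. Qed.

Lemma zzE t k l : zz t k l = (k == l)%:R + t * ((k == i0) && (l == i1))%:R.
Proof. by rewrite !mxE. Qed.

Lemma zz_add s t : zz s *m zz t = zz (s + t).
Proof.
rewrite /zz mulmxDl !mulmxDr !mul1mx mulmx1 -scalemxAl -scalemxAr.
rewrite /E mul_delta_mx_cond i10 mulr0n !scaler0 addr0 scalerDl.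
by rewrite -addrA [t *: _ + _]addrC.
Qed.

Lemma ltmax (l : 'I_N) : l != i1 -> (l < i1)%N.
Proof.
move=> li; move: (ltn_ord l); rewrite ltnS leq_eqVlt => /orP[/eqP h|//].
by case/eqP: li; apply: val_inj.
Qed.

Lemma gt0ord (k : 'I_N) : k != i0 -> (0 < k)%N.
Proof.
move=> ki; rewrite lt0n; apply/negP => /eqP h; case/eqP: ki; exact: val_inj.
Qed.

Lemma zz01 t : zz t i0 i1 = t.
Proof. by rewrite zzE i01 !eqxx mulr1 add0r. Qed.

Lemma U_UT A : Uset A -> UT A.
Proof. by case. Qed.

Lemma U_of A : upper_triangular A -> (forall k, A k k = 1) -> Uset A.
Proof.
move=> uA dA; split=> //; split=> //.
rewrite unitmxE unitfE ut_det // big1 ?oner_neq0 // => i _; exact: dA.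
Qed.

Lemma zzU t : Uset (zz t).
Proof.
apply: U_of => [i j ji|k]; rewrite zzE.
  have -> : (i == j) = false by apply/negbTE; rewrite neq_ltn ji orbT.
  have -> : (j == i1) = false.
    apply/negbTE/eqP => h; move: ji; rewrite h /= ltnNge.
    by rewrite -ltnS ltn_ord.
  by rewrite andbF mulr0 addr0.
have -> : ((k == i0) && (k == i1)) = false.
  by case: eqP => // ->.
by rewrite eqxx mulr0 addr0.
Qed.

Lemma E_mul_u u : Uset u -> E *m u = E.
Proof.
move=> [[uu _] du]; apply/matrixP => k l; rewrite mul_delta_l mxE.
case: (eqVneq l i1) => [->|li]; first by rewrite du mulr1 andbT.
rewrite andbF uu ?mulr0 //.
exact: ltmax.
Qed.

Lemma u_mul_E u : Uset u -> u *m E = E.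
Proof.
move=> [[uu _] du]; apply/matrixP => k l; rewrite mul_delta_r mxE.
case: (eqVneq k i0) => [->|ki]; first by rewrite du mul1r.
by rewrite uu ?mul0r // gt0ord.
Qed.

Lemma zz_comm t u : Uset u -> zz t *m u = u *m zz t.
Proof.
move=> Uu; rewrite /zz mulmxDl mulmxDr mul1mx mulmx1 -scalemxAl -scalemxAr.
by rewrite E_mul_u // u_mul_E.
Qed.

Lemma centr w : Uset w -> (forall u, Uset u -> w *m u = u *m w) ->
  w = zz (w i0 i1).
Proof.
move=> [[uw _] dw] cw.
have key (i j k l : 'I_N) : (i < j)%N -> w k i * (l == j)%:R = (k == i)%:R * w j l.
  move=> ij; have Uij : Uset (1%:M + delta_mx i j).
    apply: U_of => [a b ba|a]; rewrite !mxE.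
      have -> : (a == b) = false by apply/negbTE; rewrite neq_ltn ba orbT.
      case: eqP => [ai|]; last by rewrite addr0.
      case: eqP => [bj|]; last by rewrite addr0.
      by rewrite ai bj in ba; move: (ltn_trans ij ba); rewrite ltnn.
    have -> : ((a == i) && (a == j)) = false.
      by case: eqP => // ->; apply/negbTE; rewrite neq_ltn ij.
    by rewrite eqxx addr0.
  have := cw _ Uij; rewrite mulmxDr mulmxDl mulmx1 mul1mx => /addrI h.
  have h2 : (w *m delta_mx i j) k l = (delta_mx i j *m w) k l by rewrite h.
  by rewrite mul_delta_l mul_delta_r in h2.
apply/matrixP => k l; rewrite zzE.
have [lk|kl|e] := ltngtP l k.
  have -> : (k == l) = false by apply/negbTE; rewrite neq_ltn lk orbT.
  have -> : (l == i1) = false.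
    apply/negbTE/eqP => h; move: lk; rewrite h /= ltnNge.
    by rewrite -ltnS ltn_ord.
  by rewrite uw // andbF mulr0 addr0.
have -> : (k == l) = false by apply/negbTE; rewrite neq_ltn kl.
rewrite add0r.
case: (eqVneq l i1) => [->|li].
  case: (eqVneq k i0) => [->|ki]; first by rewrite mulr1.
  rewrite mulr0.
  have k0 : (i0 < k)%N by exact: gt0ord.
  have := key i0 k i0 i1 k0; rewrite eqxx mul1r => <-.
  have -> : (i1 == k) = false.
    apply/negbTE/eqP => h; move: kl; rewrite -h /= ltnNge -ltnS ltn_ord //.
  by rewrite mulr0.
have lt : (l < i1)%N.
  exact: ltmax.
have := key l i1 k i1 lt; rewrite eqxx mulr1 => ->.
have -> : (k == l) = false by apply/negbTE; rewrite neq_ltn kl.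
by rewrite !mul0r andbF mulr0.
move/val_inj: e => ->.
have -> : ((k == i0) && (k == i1)) = false by case: eqP => // ->.
by rewrite dw eqxx mulr0 addr0.
Qed.

Definition lam A := A i0 i0 / A i1 i1.

Lemma zz_conj h t : UT h -> h *m zz t = zz (lam h * t) *m h.
Proof.
move=> Uh; have h1 := UT_diag_neq0 i1 Uh; have [uh _] := Uh.
rewrite /zz mulmxDr mulmxDl mulmx1 mul1mx -scalemxAl -scalemxAr.
suff -> : h *m E = lam h *: (E *m h) by rewrite scalerA mulrC.
apply/matrixP => k l; rewrite /E mul_delta_r [in RHS]mxE mul_delta_l.
case: (eqVneq k i0) => [->|ki]; last first.
  rewrite uh ?mul0r ?andFb ?mulr0 //.
  exact: gt0ord.
case: (eqVneq l i1) => [->|li]; last first.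
  rewrite !mulr0 mul1r uh ?mulr0 //.
  exact: ltmax.
by rewrite mulr1 mul1r /lam divfK.
Qed.

End Z.

Section Cont.
Variables (R : realType) (n : nat).
Implicit Types A B u : 'M[R]_n.

Definition Ms u (s : R) : 'M[R]_n := \matrix_(i, j) (s ^+ (j - i) * u i j).
Definition ds (s : R) : 'M[R]_n := diag_mx (\row_(k < n) s ^+ k).

Lemma f1 (f : 'M[R]_n -> 'M[R]_n) :
  (forall x, UT x -> UT (f x)) ->
  (forall x y, UT x -> UT y -> f (x *m y) = f x *m f y) ->
  f 1%:M = 1%:M.
Proof.
move=> fG fM; have U1 := UT1 R n; have [_ un] := fG _ U1.
have := fM _ _ U1 U1; rewrite mulmx1 => h.
have := congr1 (mulmx (invmx (f 1%:M))) h.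
by rewrite mulKmx // mulVmx.
Qed.

Lemma diag_fixed (f : 'M[R]_n -> 'M[R]_n) u k :
  (forall x, UT x -> UT (f x)) ->
  (forall x y, UT x -> UT y -> f (x *m y) = f x *m f y) ->
  {within UT (R:=R) (n:=n), continuous f} ->
  upper_triangular u -> (forall k, u k k = 1) -> f u k k = 1.
Proof.
move=> fG fM fC uu du.
have Uu : UT u.
  split=> //; rewrite unitmxE unitfE ut_det // big1 ?oner_neq0 // => i _.
have MsU s : UT (Ms u s).
  have uM : upper_triangular (Ms u s) by move=> i j ji; rewrite mxE uu ?mulr0.
  split=> //; rewrite unitmxE unitfE ut_det // big1 ?oner_neq0 // => i _.
  by rewrite mxE subnn expr0 mul1r du.
have Ms0 : Ms u 0 = 1%:M.
  apply/matrixP => i j; rewrite !mxE expr0n.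
  have [ji|ij|e] := ltngtP j i.
  - by rewrite uu ?mulr0 //; case: eqP => // h; rewrite h ltnn in ji.
  - have -> : (j - i == 0)%N = false by rewrite subn_eq0 leqNgt ij.
    by rewrite mul0r; case: eqP => // h; rewrite h ltnn in ij.
  - by have -> : j = i := val_inj e; rewrite subnn !eqxx du mul1r.
have dsU s : s != 0 -> UT (ds s).
  move=> s0; split.
    by move=> i j ji; rewrite mxE; case: eqP => // h; rewrite h ltnn in ji.
  rewrite unitmxE unitfE det_diag; apply/prodf_neq0 => i _.
  by rewrite mxE expf_neq0.
have dM s : ds s *m Ms u s = u *m ds s.
  rewrite /ds mul_diag_mx mul_mx_diag; apply/matrixP => i j; rewrite !mxE.
  case: (leqP i j) => ij; last by rewrite uu ?mulr0 ?mul0r.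
  by rewrite mulrA -exprD subnKC // mulrC.
have eq_s s : s != 0 -> f (Ms u s) k k = f u k k.
  move=> s0; have := congr1 f (dM s).
  rewrite (fM _ _ (dsU _ s0) (MsU s)) (fM _ _ Uu (dsU _ s0)) => h.
  have h2 : (f (ds s) *m f (Ms u s)) k k = (f u *m f (ds s)) k k by rewrite h.
  move: (fG _ (dsU _ s0)) (fG _ (MsU s)) (fG _ Uu) => Ud UM Uf.
  have nd := UT_diag_neq0 k Ud.
  case: Ud => Ud _; case: UM => UM _; case: Uf => Uf _.
  rewrite !ut_diag_mul // mulrC in h2; exact: (mulIf nd h2).
have cM : Ms u s @[s --> (0:R)] --> Ms u 0.
  move=> A [P HP sPA].
  have : \forall s \near (0:R), forall ij : 'I_n * 'I_n, P ij.1 ij.2 (Ms u s ij.1 ij.2).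
    apply: (@filter_forall R ('I_n * 'I_n)%type (fun ij s => P ij.1 ij.2 (Ms u s ij.1 ij.2)) (nbhs (0:R))).
 move=> -[i j] /=.
    have ce := cvgMr_tmp (b := u i j) (@exprn_continuous R (j - i)%N (0:R)).
    have := HP i j; rewrite mxE => /ce.
    move=> hh; near=> s; rewrite mxE; near: s; exact: hh.
  by apply: filterS => s Hs; apply: sPA => i j; exact: (Hs (i, j)).
have cW : Ms u s @[s --> (0:R)] --> within (UT (R:=R) (n:=n)) (nbhs (Ms u 0)).
  move=> A HA; apply: (@filterS _ (nbhs (0:R)) _ (fun s => UT (Ms u s) -> A (Ms u s))); last exact: cM _ HA.
  by move=> s; apply; exact: MsU.
have fC' := (subspace_continuousP _ _).1 fC (Ms u 0) (MsU 0).
have c1 := cvg_comp _ _ cW fC'.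
have c2 := cvg_comp _ _ c1 (@coord_continuous R n n k k (f (Ms u 0))).
have e1 : f (Ms u 0) k k = 1 by rewrite Ms0 (f1 fG fM) mxE eqxx.
rewrite e1 in c2.
have c3 := cvg_within_filter (F := nbhs (0:R)) (fun s : R => s != 0) c2.
have c4 : (fun s => f (Ms u s) k k) @ (0:R)^' --> f u k k.
  apply: cvg_trans (near_eq_cvg _) (cvg_cst _).
  near=> s; rewrite /= eq_s //.
  near: s; exact: nbhs_dnbhs_neq.
have c5 := c3 (nbhs_filter (0:R)).
have c6 : (fun s => f (Ms u s) k k) @ (0:R)^' --> (1:R) := c5.
exact: (cvg_unique (@Rhausdorff R) c4 c6).
Unshelve. all: by end_near.
Qed.

End Cont.

Lemma ring_id (R : realType) (g : R -> R) :
  (forall x y, g (x + y) = g x + g y) -> (forall x y, g (x * y) = g x * g y) ->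
  g 1 = 1 -> forall x, g x = x.
Proof.
move=> gA gM g1.
have g0 : g 0 = 0.
  have h := gA 0 0; rewrite addr0 in h; apply: (addrI (g 0)); by rewrite -h addr0.
have gN y : g (- y) = - g y.
  by apply/eqP; rewrite -addr_eq0 -gA addNr g0.
have gB y z : g (y - z) = g y - g z by rewrite gA gN.
have gpos y : 0 <= y -> 0 <= g y.
  by move=> y0; rewrite -(sqr_sqrtr y0) expr2 gM -expr2 sqr_ge0.
have gmono y z : y <= z -> g y <= g z.
  by move=> yz; rewrite -subr_ge0 -gB gpos // subr_ge0.
have gnat k : g k%:R = k%:R.
  elim: k => [|k IH]; first by rewrite g0.
  by rewrite -addn1 natrD gA IH g1.
have gint (z : int) : g z%:~R = z%:~R.
  case: z => k; first by rewrite -pmulrn gnat.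
  by rewrite NegzE mulrNz -pmulrn gN gnat.
move=> x.
have bnd k : k%:R * (g x - x) <= 1 /\ k%:R * (x - g x) <= 1.
  set y := k%:R * x; set fl := Num.floor y.
  have l1 : fl%:~R <= y by apply: floor_le.
  have l2 : y < (fl + 1)%:~R by rewrite -floor_lt_int ltrDl.
  have gy : g y = k%:R * g x by rewrite gM gnat.
  have m1 : fl%:~R <= k%:R * g x by rewrite -gy -(gint fl) gmono.
  have m2 : k%:R * g x <= (fl + 1)%:~R by rewrite -gy -(gint (fl + 1)) gmono // ltW.
  rewrite intrD mulr1z in l2 m2; rewrite /y in l1 l2.
  split; rewrite mulrBr; lra.
case: (ltgtP (g x) x) => // h.
- have d0 : 0 < x - g x by rewrite subr_gt0.
  have := (bnd (Num.Def.archi_bound (x - g x)^-1)).2.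
  have hb : (x - g x)^-1 < (Num.Def.archi_bound (x - g x)^-1)%:R.
    by apply: archi_boundP; rewrite invr_ge0 ltW.
  have : 1 < (Num.Def.archi_bound (x - g x)^-1)%:R * (x - g x).
    by rewrite -(ltr_pdivrMr _ _ d0) div1r.
  lra.
- have d0 : 0 < g x - x by rewrite subr_gt0.
  have := (bnd (Num.Def.archi_bound (g x - x)^-1)).1.
  have hb : (g x - x)^-1 < (Num.Def.archi_bound (g x - x)^-1)%:R.
    by apply: archi_boundP; rewrite invr_ge0 ltW.
  have : 1 < (Num.Def.archi_bound (g x - x)^-1)%:R * (g x - x).
    by rewrite -(ltr_pdivrMr _ _ d0) div1r.
  lra.
Qed.

Section Main.
Variables (R : realType) (m : nat).
Local Notation N := m.+2.
Local Notation i0 := (@ord0 m.+1).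
Local Notation i1 := (@ord_max m.+1).
Local Notation G := (@UT R N).

Definition Dm (a : R) : 'M[R]_N := diag_mx (\row_(k < N) if k == i0 then a else 1).

Lemma DG a : a != 0 -> G (Dm a).
Proof.
move=> a0; split.
  by move=> i j ji; rewrite mxE; case: eqP => // h; rewrite h ltnn in ji.
rewrite unitmxE unitfE det_diag; apply/prodf_neq0 => i _.
by rewrite mxE; case: ifP => _; rewrite ?oner_neq0.
Qed.

Lemma lamD a : lam (Dm a) = a.
Proof. by rewrite /lam !mxE !eqxx /= divr1. Qed.

Lemma twisted_inv (phi : 'M[R]_N -> 'M[R]_N) x y :
  (forall x, G x -> G (phi x)) ->
  (forall h, G h -> lam (phi h) = lam h) ->
  G x -> G y -> twisted_conj G phi x y -> lam y = lam x.
Proof.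
move=> phiG lp Gx Gy [g Gg yE].
have GP := phiG _ Gg.
have e : y *m phi g = g *m x by rewrite yE mulmxKV //; case: GP.
have d k : y k k * phi g k k = g k k * x k k.
  have e2 : (y *m phi g) k k = (g *m x) k k by rewrite e.
  case: Gx Gg GP Gy => [ux _] [ug _] [uP _] [uy _].
  by move: e2; rewrite !ut_diag_mul.
have := lp _ Gg; rewrite /lam => lpg.
have := d i0; have := d i1.
have nz1 := UT_diag_neq0 i1 GP; have nz0 := UT_diag_neq0 i0 GP.
have nx1 := UT_diag_neq0 i1 Gx; have ng1 := UT_diag_neq0 i1 Gg.
have ng0 := UT_diag_neq0 i0 Gg; have ny1 := UT_diag_neq0 i1 Gy.
move: lpg nz1 nz0 nx1 ng1 ng0 ny1.
set P0 := phi g i0 i0; set P1 := phi g i1 i1.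
set g0 := g i0 i0; set g1 := g i1 i1; set x0 := x i0 i0; set x1 := x i1 i1.
set y0 := y i0 i0; set y1 := y i1 i1.
move=> lpg nz1 nz0 nx1 ng1 ng0 ny1 e1 e0.
have y0E : y0 = g0 * x0 / P0 by rewrite -e0 mulfK.
have y1E : y1 = g1 * x1 / P1 by rewrite -e1 mulfK.
have P0E : P0 = g0 * P1 / g1.
  by rewrite mulrAC -lpg divfK.
rewrite y0E y1E P0E; field.
by rewrite ng0 ng1 nz1 nx1.
Qed.

End Main.

Lemma main_m (R : realType) (m : nat) : top_R_infty (@UT R m.+2).
Proof.
move=> phi [phiG phiM phiC [psi [psiG psiphi phipsi psiC]]].
have UT1' := UT1 R m.+2.
have psiM x y : UT x -> UT y -> psi (x *m y) = psi x *m psi y.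
  move=> Gx Gy; rewrite -{1}(phipsi x Gx) -{1}(phipsi y Gy).
  rewrite -(phiM _ _ (psiG _ Gx) (psiG _ Gy)) psiphi //; exact: UT_mul (psiG _ Gx) (psiG _ Gy).
have phiU u : Uset u -> Uset (phi u).
  move=> [[uu un] du]; split; first exact: phiG.
  by move=> k; apply: diag_fixed.
have psiU u : Uset u -> Uset (psi u).
  move=> [[uu un] du]; split; first exact: psiG.
  by move=> k; apply: diag_fixed.
have phi1 := f1 phiG phiM.
pose ff t := phi (zz m t) ord0 ord_max.
have phiz t : phi (zz m t) = zz m (ff t).
  apply: centr; first exact: phiU (zzU m _).
  move=> u Uu; have Gu := U_UT Uu; have Gpu := U_UT (psiU _ Uu).
  rewrite -(phipsi u Gu) -!phiM ?(U_UT (zzU m _)) //.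
  by rewrite zz_comm //; exact: psiU.
  by case: (zzU m t).
  by case: (zzU m t).
have ffA s t : ff (s + t) = ff s + ff t.
  have h : zz m (ff (s + t)) = zz m (ff s + ff t).
    rewrite -phiz -(zz_add m s t) (phiM _ _ (U_UT (zzU m s)) (U_UT (zzU m t))).
    by rewrite !phiz zz_add.
  by rewrite -[LHS](zz01 m) h zz01.
have ff1 : ff 1 != 0.
  apply/eqP => h.
  have : phi (zz m 1) = phi 1%:M by rewrite phiz h phi1 /zz scale0r addr0.
  move/(congr1 psi); rewrite (psiphi _ (U_UT (zzU m 1))) (psiphi _ UT1') => h2.
  have : zz m 1 ord0 ord_max = (1%:M : 'M[R]_m.+2) ord0 ord_max by rewrite h2.
  by rewrite zz01 mxE /= => /eqP; rewrite oner_eq0.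
have ffM h t : UT h -> ff (lam h * t) = lam (phi h) * ff t.
  move=> Gh; have := zz_conj t Gh; move/(congr1 phi).
  rewrite (phiM _ _ Gh (U_UT (zzU m t))) (phiM _ _ (U_UT (zzU m _)) Gh).
  rewrite !phiz (zz_conj _ (phiG _ Gh)) => e.
  have GP := phiG _ Gh; case: GP => _ uP.
  have e2 := congr1 (fun M => M *m invmx (phi h)) e.
  rewrite /= !mulmxK // in e2.
  by rewrite -[LHS](zz01 m) -e2 zz01.
pose g t := ff t / ff 1.
have ff0 : ff 0 = 0.
  have h := ffA 0 0; rewrite addr0 in h; apply: (addrI (ff 0)); by rewrite -h addr0.
have gA s t : g (s + t) = g s + g t by rewrite /g ffA mulrDl.
have g1 : g 1 = 1 by rewrite /g divff.
have gM x y : g (x * y) = g x * g y.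
  case: (eqVneq x 0) => [->|x0]; first by rewrite mul0r /g ff0 !mul0r.
  have h1 := ffM _ y (DG m x0); have h2 := ffM _ 1 (DG m x0).
  rewrite !lamD in h1 h2; rewrite mulr1 in h2.
  by rewrite /g h1 h2 mulfK // mulrA.
have gid := ring_id gA gM g1.
have lamphi h : UT h -> lam (phi h) = lam h.
  move=> Gh; have := ffM h 1 Gh; rewrite mulr1 => e.
  have := gid (lam h); rewrite /g e mulfK //.
move=> fin.
pose F (k : nat) := [set y | UT y /\ twisted_conj (@UT R m.+2) phi (Dm m k.+1%:R) y].
have Fin k : twisted_classes (@UT R m.+2) phi (F k).
  by exists (Dm m k.+1%:R) => //; apply: DG; rewrite pnatr_eq0.
have inj : injective F.
  move=> k l e.
  have Gl : UT (Dm m (l.+1%:R : R)) by apply: DG; rewrite pnatr_eq0.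
  have : F l (Dm m l.+1%:R).
    split=> //; exists 1%:M => //.
    by rewrite mul1mx phi1 invmx1 mulmx1.
  rewrite -e => -[_ tc].
  have Gk : UT (Dm m (k.+1%:R : R)) by apply: DG; rewrite pnatr_eq0.
  have := twisted_inv phiG lamphi Gk Gl tc.
  rewrite !lamD => /eqP; rewrite eqr_nat eqSS => /eqP ->//.
apply: infinite_nat.
apply: (sub_finite_set _ (finite_preimage (in2W inj) fin)).
by move=> k _; exact: Fin.
Qed.

Theorem theorem5p3 (R : realType) (n : nat) :
  (2 <= n)%N -> top_R_infty (@UT R n).
Proof.
by case: n => [|[|m]] // _; exact: main_m.
Qed.
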